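(* Let $\boldsymbol{\lambda}\in\Delta_N$, $\boldsymbol{\nu}=(\nu_1,\dots,\nu_N)\in\mathcal{P}_1(\mathbb{R})^N$, $\theta\in[0,1]$ and $\nu^\theta=\mathrm{VMed}_{\boldsymbol{\lambda}}(\theta,\boldsymbol{\nu})$. If $\nu_1,\dots,\nu_N$ are absolutely continuous with respect to Lebesgue measure with densities $f_1,\dots,f_N\in L^1(\mathbb{R})$, then $\nu^\theta$ is absolutely continuous with a density $f_{\nu^\theta}\in L^1(\mathbb{R})$ satisfying $$\min_{1\le i\le N}f_i\le f_{\nu^\theta}\le\max_{1\le i\le N}f_i\quad\text{a.e. on }\mathbb{R}.$$ In particular, if for some $p\in[1,\infty]$ one has $f_i\in L^p(\mathbb{R})$ for $i=1,\dots,N$, then $f_{\nu^\theta}\in L^p(\mathbb{R})$ and $$\|\min_i f_i\|_{L^p(\mathbb{R})}\le\|f_{\nu^\theta}\|_{L^p(\mathbb{R})}\le\|\max_i f_i\|_{L^p(\mathbb{R})}\le\sum_{i=1}^N\|f_i\|_{L^p(\mathbb{R})}.$$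
   Context: $\Delta_N=\{(\lambda_1,\dots,\lambda_N)\in\mathbb{R}_+^N:\sum_i\lambda_i=1\}$; $\mathcal{P}_1(\mathbb{R})$ denotes Borel probability measures on $\mathbb{R}$ with finite first moment. For $\nu\in\mathcal{P}_1(\mathbb{R})$, $F_\nu(x)=\nu((-\infty,x])$ is its cdf. For $\mathbf{x}=(x_1,\dots,x_N)\in\mathbb{R}^N$, the lower and upper weighted medians are $\mathrm{M}^-_{\boldsymbol{\lambda}}(\mathbf{x})=\inf\{y\in\mathbb{R}:\sum_{i:x_i\le y}\lambda_i\ge\frac12\}$ and $\mathrm{M}^+_{\boldsymbol{\lambda}}(\mathbf{x})=\sup\{y\in\mathbb{R}:\sum_{i:x_i<y}\lambda_i\le\frac12\}$. Set $F^\pm(x)=\mathrm{M}^\pm_{\boldsymbol{\lambda}}(F_{\nu_1}(x),\dots,F_{\nu_N}(x))$ and $F_\theta=(1-\theta)F^-+\theta F^+$; $F_\theta$ is the cdf of a probability measure in $\mathcal{P}_1(\mathbb{R})$, which is denoted $\mathrm{VMed}_{\boldsymbol{\lambda}}(\theta,\boldsymbol{\nu})$ (vertical median selection). *)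

(* Defs.v *)
From HB Require Import structures.
From mathcomp Require Import all_boot all_order all_algebra.
From mathcomp Require Import all_classical all_reals all_analysis.
Set Implicit Arguments. Unset Strict Implicit. Unset Printing Implicit Defensive.
Import Order.TTheory GRing.Theory Num.Theory.
Local Open Scope classical_set_scope.
Local Open Scope ring_scope.

(* Cumulative distribution function F_nu(x) = nu((-oo, x]) of a
   (probability) measure on R.  For a probability measure the value is
   finite, so [fine] is harmless. *)
Definition mcdf (R : realType) (nu : set R -> \bar R) (x : R) : R :=
  fine (nu [set` `]-oo, x]]).

Definition wmed_minus (R : realType) (N : nat) (lam : 'I_N -> R)
  (xs : 'I_N -> R) : R :=
  inf [set y : R | 2^-1 <= \sum_(i < N | xs i <= y) lam i].

Definition wmed_plus (R : realType) (N : nat) (lam : 'I_N -> R)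
  (xs : 'I_N -> R) : R :=
  sup [set y : R | \sum_(i < N | xs i < y) lam i <= 2^-1].

Definition Fminus (R : realType) (N : nat) (lam : 'I_N -> R)
  (nu : 'I_N -> set R -> \bar R) (x : R) : R :=
  wmed_minus lam (fun i => mcdf (nu i) x).

Definition Fplus (R : realType) (N : nat) (lam : 'I_N -> R)
  (nu : 'I_N -> set R -> \bar R) (x : R) : R :=
  wmed_plus lam (fun i => mcdf (nu i) x).

(* F_theta = (1 - theta) F^- + theta F^+ : the cdf of VMed_lam(theta, nu) *)
Definition Ftheta (R : realType) (N : nat) (lam : 'I_N -> R)
  (theta : R) (nu : 'I_N -> set R -> \bar R) (x : R) : R :=
  (1 - theta) * Fminus lam nu x + theta * Fplus lam nu x.

(* pointwise min_i f_i and max_i f_i (meaningful for N >= 1, which is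
   forced by lam in Delta_N) *)
Definition min_fun (R : realType) (N : nat) (f : 'I_N -> R -> R) (x : R) : R :=
  fine (\big[mine/+oo%E]_(i < N) (f i x)%:E).

Definition max_fun (R : realType) (N : nat) (f : 'I_N -> R -> R) (x : R) : R :=
  fine (\big[maxe/-oo%E]_(i < N) (f i x)%:E).

(* Main.v *)
Require Import Defs.
From HB Require Import structures.
From mathcomp Require Import all_boot all_order all_algebra.
From mathcomp Require Import all_classical all_reals all_analysis.
From mathcomp Require Import ring lra measurable_realfun ess_sup_inf.
Import Order.TTheory GRing.Theory Num.Theory numFieldNormedType.Exports numFieldTopology.Exports.
Local Open Scope classical_set_scope.
Local Open Scope ring_scope.
Lemma sum_filter_le (R : realType) N (lam : 'I_N -> R) (P Q : pred 'I_N) :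
  (forall i, 0 <= lam i) -> (forall i, P i -> Q i) ->
  \sum_(i < N | P i) lam i <= \sum_(i < N | Q i) lam i.
Proof.
move=> h0 PQ; rewrite [leLHS]big_mkcond [leRHS]big_mkcond /=.
apply: ler_sum => i _; case: ifP => Pi; first by rewrite (PQ _ Pi).
by case: ifP.
Qed.

Lemma le_sum_abs (R : realType) N (xs : 'I_N -> R) i : xs i <= \sum_(j < N) `|xs j|.
Proof.
rewrite (bigD1 i) //=; apply: le_trans (ler_norm _) _.
by rewrite lerDl sumr_ge0.
Qed.

Lemma ge_sum_abs (R : realType) N (xs : 'I_N -> R) i : - \sum_(j < N) `|xs j| <= xs i.
Proof.
rewrite lerNl; have := le_sum_abs _ _ (fun j => - xs j) i; move/le_trans; apply.
by apply: ler_sum => j _; rewrite normrN.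
Qed.

Lemma wmed_minus_le (R : realType) N (lam : 'I_N -> R)
  (h0 : forall i, 0 <= lam i) (h1 : \sum_(i < N) lam i = 1)
  (xs ys : 'I_N -> R) (c : R) :
  (forall i, ys i <= xs i + c) -> wmed_minus lam ys <= wmed_minus lam xs + c.
Proof.
move=> hyx; rewrite /wmed_minus -lerBlDr.
set A := [set y | _ <= \sum_(i < N | xs i <= y) lam i].
set B := [set y | _ <= \sum_(i < N | ys i <= y) lam i].
have hB : has_lbound B.
  exists (- \sum_(j < N) `|ys j|) => y By; rewrite leNgt; apply/negP => hy.
  move: By; rewrite /B /= big_pred0; first by rewrite leNgt invr_gt0 ltr0n.
  by move=> i; apply/negbTE; rewrite -ltNge; apply: lt_le_trans hy (ge_sum_abs _ _ _ _).
have hA : A !=set0.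
  exists (\sum_(j < N) `|xs j|); rewrite /A /=.
  rewrite (eq_bigl xpredT); last by move=> i; rewrite le_sum_abs.
  by rewrite h1 invf_le1 // ler1n.
apply: lb_le_inf => // y Ay; rewrite lerBlDr.
apply: (ge_inf hB); rewrite /B /=; apply: le_trans Ay _.
by apply: sum_filter_le => // i xi; apply: le_trans (hyx i) _; rewrite lerD2r.
Qed.

Lemma wmed_plus_le (R : realType) N (lam : 'I_N -> R)
  (h0 : forall i, 0 <= lam i) (h1 : \sum_(i < N) lam i = 1)
  (xs ys : 'I_N -> R) (c : R) :
  (forall i, ys i <= xs i + c) -> wmed_plus lam ys <= wmed_plus lam xs + c.
Proof.
move=> hyx; rewrite /wmed_plus -lerBlDr.
set A := [set y | \sum_(i < N | xs i < y) lam i <= _].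
set B := [set y | \sum_(i < N | ys i < y) lam i <= _].
have hA : has_sup A.
  split.
    exists (- \sum_(j < N) `|xs j|); rewrite /A /= big_pred0 ?invr_ge0 ?ler0n //.
    by move=> i; apply/negbTE; rewrite -leNgt ge_sum_abs.
  exists (\sum_(j < N) `|xs j|) => y Ay; rewrite leNgt; apply/negP => hy.
  move: Ay; rewrite /A /= (eq_bigl xpredT); last first.
    by move=> i; apply: le_lt_trans hy; rewrite le_sum_abs.
  by rewrite h1 invf_ge1 ?ltr0n // lern1.
have hB : B !=set0.
  exists (- \sum_(j < N) `|ys j|); rewrite /B /= big_pred0 ?invr_ge0 ?ler0n //.
  by move=> i; apply/negbTE; rewrite -leNgt ge_sum_abs.
rewrite lerBlDr; apply: ge_sup => // y By; rewrite -lerBlDr.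
apply: (sup_upper_bound hA); rewrite /A /=; apply: le_trans By.
apply: sum_filter_le => // i xi; apply: le_lt_trans (hyx i) _.
by rewrite -ltrBrDr.
Qed.
Section transport.
Context (R : realType) (P : {finite_measure set R -> \bar R}).
Definition toR : set (measurableTypeR R) -> \bar R := P.
Let P'0 : toR set0 = 0%E. Proof. exact: measure0. Qed.
Let P'ge0 A : (0 <= toR A)%E. Proof. exact: measure_ge0. Qed.
Let P'sa : semi_sigma_additive toR. Proof. exact: (@measure_semi_sigma_additive _ R R P). Qed.
HB.instance Definition _ := isMeasure.Build _ _ _ toR P'0 P'ge0 P'sa.
Let P'fin : fin_num_fun toR. Proof. move=> A mA; exact: (@fin_num_measure _ R R P). Qed.
HB.instance Definition _ := Measure_isFinite.Build _ _ _ toR P'fin.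
End transport.

Section cdfs.
Context (R : realType) (m : {measure set (measurableTypeR R) -> \bar R})
  (mfin : forall A, measurable A -> m A \is a fin_num).

Lemma mcdf_itv a b : a <= b -> m (`]a, b]%classic : set R) = (mcdf m b - mcdf m a)%:E.
Proof.
move=> ab; rewrite /mcdf EFinB !fineK ?mfin//.
have : `]a, b]%classic = `]-oo, b] `\` `]-oo, a] => [|->].
  by rewrite -[RHS]setCK setCD setCitvl setUC -[LHS]setCK setCitv.
rewrite measureD ?setIidr//; first exact: subset_itvl.
by rewrite -ge0_fin_numE// mfin.
Qed.

Lemma mcdf_nd : nondecreasing (mcdf m).
Proof.
move=> a b ab; rewrite -subr_ge0 -lee_fin -mcdf_itv //.
Qed.

Lemma mcdf_rc : right_continuous (mcdf m).
Proof.
move=> a; rewrite /mcdf; apply: fine_cvg; rewrite fineK ?mfin//.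
pose G := fun r : R => m (`]-oo, r]%classic : set R).
have Gnd : {homo G : x y / x <= y >-> (x <= y)%E}.
  by move=> x y xy; rewrite le_measure ?inE//; exact: subitvPr.
pose s := fine (ereal_inf (G @` `]a, (a + 1)%R]%classic)).
have cdf_s : G r @[r --> a^'+] --> s%:E.
  rewrite /s fineK.
  - apply: nondecreasing_at_right_cvge; first by rewrite ltBSide /= ?ltrDl.
    by move=> *; exact: Gnd.
  - apply/fin_numPlt/andP; split=>//.
    + by rewrite (lt_le_trans (ltNyr 0%R)) ?le_ereal_inf_tmp//= => l[? _] <-; exact: measure_ge0.
    + rewrite (@le_lt_trans _ _ (G (a + 1)%R))// ?ltey_eq ?mfin//.
      apply: ereal_inf_le; exists (G (a + 1)%R) => //.
      by exists (a + 1)%R => //=; rewrite in_itv /=; apply/andP; rewrite ltrDl.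
have cdf_ns : G (a + n.+1%:R^-1) @[n --> \oo] --> s%:E.
  move/cvge_at_rightP : cdf_s; apply; split=> [n|]; rewrite ?ltrDl //.
  rewrite -[X in _ --> X]addr0; apply: (@cvgD _ R^o); first exact: cvg_cst.
  by rewrite gtr0_cvgV0 ?cvg_shiftS; [exact: cvgr_idn | near=> n].
have cdf_na : G (a + n.+1%:R^-1) @[n --> \oo] --> G a.
  pose F n : set (measurableTypeR R) := (`]-oo, (a + n.+1%:R^-1)%R]%classic : set R).
  suff : m (F n) @[n --> \oo] --> m (\bigcap_n F n).
    by rewrite [in X in _ --> X -> _]/F -itvNycEbigcap.
  apply: nonincreasing_cvg_mu => [| | |p q pq].
  - by rewrite ltey_eq mfin//; exact: measurable_itv.
  - by move=> ?; exact: measurable_itv.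
  - by apply: bigcap_measurable => [|? _]; [exists 0%N|exact: measurable_itv].
  - apply/subsetPset; apply: subset_itvl.
    by rewrite bnd_simp lerD2l lef_pV2 ?posrE// ler_nat.
suff : G r @[r --> a^'+] --> G a by [].
by rewrite -(cvg_unique _ cdf_ns cdf_na).
Unshelve. all: by end_near. Qed.

End cdfs.

Lemma LS_ocitv (R : realType) (f : cumulative R R) (a b : R) : a <= b ->
  lebesgue_stieltjes_measure f (`]a, b]%classic : set R) = (f b - f a)%:E.
Proof.
move=> ab; rewrite /lebesgue_stieltjes_measure /measure_extension/=.
rewrite measurable_mu_extE/=; last exact: is_ocitv.
by rewrite wlength_itv_bnd.
Qed.

Lemma meas_le (R : realType) (m1 m2 : {measure set (measurableTypeR R) -> \bar R})
  (fin1 : forall A, measurable A -> m1 A \is a fin_num)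
  (fin2 : forall A, measurable A -> m2 A \is a fin_num) :
  (forall a b, a <= b -> mcdf m2 a - mcdf m1 a <= mcdf m2 b - mcdf m1 b) ->
  forall A, measurable A -> (m1 A <= m2 A)%E.
Proof.
move=> hK.
pose C2 : cumulative R R := HB.pack_for (cumulative R R) (mcdf m2)
  (isCumulative.Build R _ R (mcdf m2) (@mcdf_nd R m2 fin2) (@mcdf_rc R m2 fin2)).
pose K := fun x => mcdf m2 x - mcdf m1 x.
have Knd : nondecreasing K by move=> a b ab; exact: hK.
have Krc : right_continuous K.
  by move=> a; apply: cvgB; [exact: (@mcdf_rc R m2 fin2)|exact: (@mcdf_rc R m1 fin1)].
pose Kc : cumulative R R := HB.pack_for (cumulative R R) K
  (isCumulative.Build R _ R K Knd Krc).
have E1 A : measurable A -> lebesgue_stieltjes_measure C2 A = m2 A.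
  apply: lebesgue_stieltjes_measure_unique => X [[a b]] _ <-.
  have [ab|ba] := leP a b; last first.
    by rewrite set_itv_ge ?measure0// bnd_simp -leNgt ltW.
  by rewrite LS_ocitv// (@mcdf_itv R m2 fin2).
have E2 A : measurable A -> lebesgue_stieltjes_measure C2 A =
    (m1 A + lebesgue_stieltjes_measure Kc A)%E.
  move=> mA; rewrite -(measure_addE m1 (lebesgue_stieltjes_measure Kc)).
  move: A mA; apply: lebesgue_stieltjes_measure_unique => X [[a b]] _ <-.
  apply: eq_trans (esym (measure_addE m1 (lebesgue_stieltjes_measure Kc) _)) => /=.
  have [ab|ba] := leP a b; last first.
    by rewrite set_itv_ge ?measure0 ?adde0// bnd_simp -leNgt ltW.
  rewrite !LS_ocitv// (@mcdf_itv R m1 fin1)// -EFinD; congr EFin.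
  rewrite /= /K; set u := mcdf m2 b; set v := mcdf m2 a; set w := mcdf m1 b; set z := mcdf m1 a.
  lra.
move=> A mA; rewrite -E1// E2// leeDl//.
Qed.
Section bigm.
Context (R : realType) (N : nat).
Local Open Scope ereal_scope.

Lemma bigmaxe_cases (a : 'I_N -> R) (s : seq 'I_N) :
  \big[maxe/-oo]_(i <- s) (a i)%:E = -oo \/
  exists j, \big[maxe/-oo]_(i <- s) (a i)%:E = (a j)%:E.
Proof.
elim: s => [|j s [IH|[k IH]]]; rewrite ?big_nil ?big_cons; [by left| |].
  by right; exists j; rewrite IH max_l// leNye.
right; rewrite IH; case: (leP (a k) (a j)) => h.
  by exists j; rewrite max_l// lee_fin.
by exists k; rewrite max_r// lee_fin ltW.
Qed.

Lemma bigmine_cases (a : 'I_N -> R) (s : seq 'I_N) :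
  \big[mine/+oo]_(i <- s) (a i)%:E = +oo \/
  exists j, \big[mine/+oo]_(i <- s) (a i)%:E = (a j)%:E.
Proof.
elim: s => [|j s [IH|[k IH]]]; rewrite ?big_nil ?big_cons; [by left| |].
  by right; exists j; rewrite IH min_l// leey.
right; rewrite IH; case: (leP (a k) (a j)) => h.
  by exists k; rewrite min_r// lee_fin.
by exists j; rewrite min_l// lee_fin ltW.
Qed.

Lemma bigmaxe_ge (a : 'I_N -> R) i : (a i)%:E <= \big[maxe/-oo]_(j < N) (a j)%:E.
Proof. by rewrite (bigD1 i)//= le_max lexx. Qed.

Lemma bigmine_le (a : 'I_N -> R) i : \big[mine/+oo]_(j < N) (a j)%:E <= (a i)%:E.
Proof. by rewrite (bigD1 i)//= ge_min lexx. Qed.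

Lemma max_fun_ge (f : 'I_N -> R -> R) i x : (f i x <= max_fun f x)%R.
Proof.
rewrite /max_fun; have := bigmaxe_ge (fun j => f j x) i.
have [->|[k ->]] := bigmaxe_cases (fun j => f j x) (index_enum 'I_N).
  by rewrite leeNy_eq.
by rewrite lee_fin.
Qed.

Lemma min_fun_le (f : 'I_N -> R -> R) i x : (min_fun f x <= f i x)%R.
Proof.
rewrite /min_fun; have := bigmine_le (fun j => f j x) i.
have [->|[k ->]] := bigmine_cases (fun j => f j x) (index_enum 'I_N).
  by rewrite leye_eq.
by rewrite lee_fin.
Qed.

Lemma max_fun_ex (f : 'I_N -> R -> R) (i0 : 'I_N) x : exists j, max_fun f x = f j x.
Proof.
rewrite /max_fun; have := bigmaxe_ge (fun j => f j x) i0.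
have [->|[k ->]] := bigmaxe_cases (fun j => f j x) (index_enum 'I_N).
  by rewrite leeNy_eq.
by exists k.
Qed.

Lemma min_fun_ex (f : 'I_N -> R -> R) (i0 : 'I_N) x : exists j, min_fun f x = f j x.
Proof.
rewrite /min_fun; have := bigmine_le (fun j => f j x) i0.
have [->|[k ->]] := bigmine_cases (fun j => f j x) (index_enum 'I_N).
  by rewrite leye_eq.
by exists k.
Qed.

Lemma max_fun_meas (f : 'I_N -> R -> R) :
  (forall i, measurable_fun setT (f i)) -> measurable_fun setT (max_fun f).
Proof.
move=> mf; rewrite /max_fun.
change (measurable_fun setT (fine \o (fun x => \big[maxe/-oo%E]_(i < N) (f i x)%:E))).
apply: (measurableT_comp (measurable_realfun.fine_measurable measurableT)) => //.
elim: (index_enum _) => [|j s IH].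
  by under eq_fun do rewrite big_nil; exact: measurable_cst.
under eq_fun do rewrite big_cons.
by apply: measurable_maxe => //; apply/measurable_EFinP.
Qed.

Lemma min_fun_meas (f : 'I_N -> R -> R) :
  (forall i, measurable_fun setT (f i)) -> measurable_fun setT (min_fun f).
Proof.
move=> mf; rewrite /min_fun.
change (measurable_fun setT (fine \o (fun x => \big[mine/+oo%E]_(i < N) (f i x)%:E))).
apply: (measurableT_comp (measurable_realfun.fine_measurable measurableT)) => //.
elim: (index_enum _) => [|j s IH].
  by under eq_fun do rewrite big_nil; exact: measurable_cst.
under eq_fun do rewrite big_cons.
by apply: measurable_mine => //; apply/measurable_EFinP.
Qed.

End bigm.

Lemma Ftheta_le (R : realType) N (lam : 'I_N -> R)
  (h0 : forall i, 0 <= lam i) (h1 : \sum_(i < N) lam i = 1)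
  (theta : R) (ht : 0 <= theta <= 1) (nu : 'I_N -> set R -> \bar R) (a b c : R) :
  (forall i, mcdf (nu i) b <= mcdf (nu i) a + c) ->
  Ftheta lam theta nu b <= Ftheta lam theta nu a + c.
Proof.
move=> h; rewrite /Ftheta /Fminus /Fplus.
have k1 := wmed_minus_le _ _ _ h0 h1 (fun i => mcdf (nu i) a) (fun i => mcdf (nu i) b) c h.
have k2 := wmed_plus_le _ _ _ h0 h1 (fun i => mcdf (nu i) a) (fun i => mcdf (nu i) b) c h.
move: ht => /andP[t0 t1]; nra.
Qed.

Lemma ae_le_int d (T : measurableType d) (R : realType) (mu : {measure set T -> \bar R})
  (u v : T -> R) :
  mu.-integrable setT (EFin \o u) -> mu.-integrable setT (EFin \o v) ->
  (forall E, measurable E ->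
    (\int[mu]_(x in E) (u x)%:E <= \int[mu]_(x in E) (v x)%:E)%E) ->
  {ae mu, forall x, u x <= v x}.
Proof.
move=> iu iv huv.
have mu' := measurable_int _ iu.
have mv' := measurable_int _ iv.
pose A := [set x | v x < u x].
have mA : measurable A.
  have := measurable_lte measurableT mv' mu'; rewrite setTI.
  by congr measurable; apply/seteqP; split => x /=; rewrite lte_fin.
have iA f : mu.-integrable setT f -> mu.-integrable A f.
  by apply: integrableS.
pose w x := u x - v x.
have hw0 : (\int[mu]_(x in A) (w x)%:E = 0)%E.
  apply/eqP; rewrite eq_le; apply/andP; split.
    rewrite /w; under eq_integral do rewrite EFinB.
    by rewrite integralB_EFin// ?iA// sube_le0; exact: huv.
  by apply: integral_ge0 => x Ax; rewrite lee_fin subr_ge0 ltW.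
have : ae_eq mu A (EFin \o w) (cst 0%E).
  apply/(ae_eq_integral_abs mu mA).
    apply: measurable_funTS; apply/measurable_EFinP.
    by apply: measurable_funB; apply/measurable_EFinP.
  rewrite -hw0; apply: eq_integral => x; rewrite inE => Ax.
  by rewrite gee0_abs// lee_fin subr_ge0 ltW.
apply: filterS => x /= hx; rewrite leNgt; apply/negP => vu.
have := hx vu; rewrite /w => /eqP; rewrite eqe subr_eq0 => /eqP uv.
by move: vu; rewrite uv ltxx.
Qed.

Lemma Lnorm_le_ae d (T : measurableType d) (R : realType) (mu : {measure set T -> \bar R})
  (u v : T -> R) (p : \bar R) : (1 <= p)%E ->
  measurable_fun setT u -> measurable_fun setT v ->
  {ae mu, forall x, `|u x| <= `|v x|} ->
  ('N[mu]_p[EFin \o u] <= 'N[mu]_p[EFin \o v])%E.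
Proof.
case: p => [r||] //= p1 mu' mv' h; rewrite unlock /Lnorm.
  have r0 : 0 < r by rewrite lee_fin in p1; exact: lt_le_trans p1.
  have mp (w : T -> R) : measurable_fun setT w ->
      measurable_fun setT (fun x => (`|(w x)%:E| `^ r)%E).
    move=> mw; under eq_fun do rewrite abse_EFin poweR_EFin.
    apply/measurable_EFinP.
    apply: (@measurableT_comp _ _ _ _ _ _ (@powR R ^~ r)) => //.
    exact: measurableT_comp.
  apply: gt0_ler_poweR; first by rewrite invr_ge0 ltW.
  - by rewrite in_itv /= leey andbT integral_ge0// => x _; rewrite ?lee_fin ?powR_ge0 ?poweR_ge0.
  - by rewrite in_itv /= leey andbT integral_ge0// => x _; rewrite ?lee_fin ?powR_ge0 ?poweR_ge0.
  apply: ae_ge0_le_integral.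
  all: try (by move=> x _; exact: poweR_ge0).
  all: try exact: mp.
  all: try exact: measurableT.
  apply: filterS h => x hx _ /=.
  rewrite ?abse_EFin ?poweR_EFin ?lee_fin; apply: ge0_ler_powR; rewrite ?nnegrE//; exact: ltW.
case: ifPn => // _; apply: le_ess_sup.
by apply: filterS h => x hx; rewrite /= ?abse_EFin lee_fin.
Qed.

Lemma Lnorm_sum d (T : measurableType d) (R : realType) (mu : {measure set T -> \bar R})
  (I : Type) (f : I -> T -> R) (p : \bar R) : (1 <= p)%E ->
  (forall i, measurable_fun setT (f i)) -> forall s : seq I,
  ('N[mu]_p[EFin \o (fun x => (\sum_(i <- s) f i x)%R)] <=
     \sum_(i <- s) 'N[mu]_p[EFin \o f i])%E.
Proof.
move=> p1 mf; elim => [|j s IH].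
  rewrite big_nil; under eq_fun do rewrite big_nil.
  rewrite (_ : EFin \o _ = cst 0%E) ?Lnorm0//.
  by rewrite gt_eqF// (lt_le_trans _ p1).
rewrite big_cons.
under eq_fun do rewrite big_cons.
have mk := @eminkowski _ _ _ mu (f j) (fun x => (\sum_(i <- s) f i x)%R) p (mf j) (measurable_sum _ mf) p1.
apply: (le_trans mk).
by rewrite leeD2l.
Qed.

Lemma aeS (R : realType) (P Q : R -> Prop) :
  (forall x, P x -> Q x) -> {ae (@lebesgue_measure R), forall x, P x} ->
  {ae (@lebesgue_measure R), forall x, Q x}.
Proof. by move=> PQ; apply: (@filterS _ _ (ae_filter_ringOfSetsType (@lebesgue_measure R))). Qed.
Arguments aeS {R P Q}.

Lemma aeS2 (R : realType) (P Q S : R -> Prop) :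
  (forall x, P x -> Q x -> S x) -> {ae (@lebesgue_measure R), forall x, P x} ->
  {ae (@lebesgue_measure R), forall x, Q x} -> {ae (@lebesgue_measure R), forall x, S x}.
Proof. by move=> PQ; apply: (@filterS2 _ _ (ae_filter_ringOfSetsType (@lebesgue_measure R))). Qed.
Arguments aeS2 {R P Q S}.

Lemma ae_forallI (R : realType) (I : finType) (P : I -> R -> Prop) :
  (forall i, {ae (@lebesgue_measure R), forall x, P i x}) ->
  {ae (@lebesgue_measure R), forall x, forall i, P i x}.
Proof. by move=> h; apply: (@filter_forall _ _ _ _ (ae_filter_ringOfSetsType (@lebesgue_measure R))). Qed.

Lemma toR_fin (R : realType) (P : {finite_measure set R -> \bar R}) (A : set (measurableTypeR R)) :
  measurable A -> toR R P A \is a fin_num.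
Proof. by move=> mA; apply: fin_num_measure. Qed.

Theorem theorem4p6 (R : realType) (N : nat) (lam : 'I_N -> R)
  (hlam0 : forall i, 0 <= lam i) (hlam1 : \sum_(i < N) lam i = 1)
  (nu : 'I_N -> probability R R)
  (hnu1 : forall i, (\int[nu i]_x (`|x|)%:E < +oo)%E)
  (theta : R) (htheta : 0 <= theta <= 1)
  (f : 'I_N -> R -> R)
  (hfint : forall i, lebesgue_measure.-integrable setT (EFin \o f i))
  (hdens : forall i (A : set R), measurable A ->
     nu i A = (\int[lebesgue_measure]_(x in A) (f i x)%:E)%E)
  (nutheta : probability R R)
  (hnutheta : forall x, mcdf nutheta x = Ftheta lam theta (fun i => nu i) x) :
  exists g : R -> R,
    [/\ lebesgue_measure.-integrable setT (EFin \o g),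
        forall A : set R, measurable A ->
          nutheta A = (\int[lebesgue_measure]_(x in A) (g x)%:E)%E,
        {ae lebesgue_measure, forall x, min_fun f x <= g x <= max_fun f x} &
        forall p : \bar R, (1 <= p)%E ->
          (forall i, ('N[lebesgue_measure]_p[EFin \o f i] < +oo)%E) ->
          [/\ ('N[lebesgue_measure]_p[EFin \o g] < +oo)%E,
              ('N[lebesgue_measure]_p[EFin \o min_fun f]
                 <= 'N[lebesgue_measure]_p[EFin \o g])%E,
              ('N[lebesgue_measure]_p[EFin \o g]
                 <= 'N[lebesgue_measure]_p[EFin \o max_fun f])%E &
              ('N[lebesgue_measure]_p[EFin \o max_fun f]
                 <= \sum_(i < N) 'N[lebesgue_measure]_p[EFin \o f i])%E]].
Proof.
have [i0 _] : exists i0 : 'I_N, true.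
  case: (pickP (fun i : 'I_N => true)) => [i0 _|h]; first by exists i0.
  by move: hlam1; rewrite big_pred0 // => /eqP; rewrite eq_sym oner_eq0.
have mf i : measurable_fun (setT : set (measurableTypeR R)) (f i).
  by apply/measurable_EFinP; exact: measurable_int (hfint i).
have i0f : (@lebesgue_measure R).-integrable setT (EFin \o (fun _ : R => 0 : R)).
  apply: (@le_integrable _ _ _ (@lebesgue_measure R) setT measurableT _ (EFin \o f i0)); last exact: hfint.
    exact: measurable_cst.
  by move=> x _; rewrite /= normr0 lee_fin normr_ge0.
have f0 i : {ae (@lebesgue_measure R), forall x, 0 <= f i x}.
  apply: (ae_le_int _ _ _ (@lebesgue_measure R) (fun _ => 0) (f i)) => // E mE.
  rewrite (eq_integral (fun _ => 0%E)) // integral0 -hdens //.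
have fall : {ae (@lebesgue_measure R), forall x, forall i, 0 <= f i x}.
  by apply: (ae_forallI _ _ (fun i x => 0 <= f i x)).
pose fp i x := Num.max (f i x) 0.
have mfp i : measurable_fun (setT : set (measurableTypeR R)) (fp i).
  by apply: measurable_maxr => //; exact: measurable_cst.
have hdp i (A : set R) : measurable A ->
    nu i A = (\int[(@lebesgue_measure R)]_(x in A) (fp i x)%:E)%E.
  move=> mA; rewrite hdens //; apply: ae_eq_integral => //.
  - by apply: measurable_funTS; apply/measurable_EFinP.
  - by apply: measurable_funTS; apply/measurable_EFinP.
  by apply: aeS (f0 i) => x hx _; rewrite /fp max_l.
pose mx := max_fun f; pose mn := min_fun f.
pose Mp x := Num.max (mx x) 0; pose mp x := Num.max (mn x) 0.
have mmx : measurable_fun (setT : set (measurableTypeR R)) mx.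
  exact: max_fun_meas.
have mmn : measurable_fun (setT : set (measurableTypeR R)) mn.
  exact: min_fun_meas.
have mMp : measurable_fun (setT : set (measurableTypeR R)) Mp.
  by apply: measurable_maxr => //; exact: measurable_cst.
have mmp : measurable_fun (setT : set (measurableTypeR R)) mp.
  by apply: measurable_maxr => //; exact: measurable_cst.
have Mpge i x : fp i x <= Mp x.
  by rewrite /fp /Mp ge_max !le_max (max_fun_ge _ _ f i x) lexx !orbT.
have mple i x : mp x <= fp i x.
  by rewrite /fp /mp ge_max !le_max (min_fun_le _ _ f i x) lexx !orbT.
have Mp0 x : 0 <= Mp x by rewrite /Mp le_max lexx orbT.
have mp0 x : 0 <= mp x by rewrite /mp le_max lexx orbT.
have iS : (@lebesgue_measure R).-integrable setT (fun x => \sum_(i < N) (`|f i x|)%:E)%E.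
  apply: integrable_sum => // i _.
  exact: (integrable_norm (hfint i)).
have bnd (w : R -> R) : measurable_fun (setT : set (measurableTypeR R)) w ->
    (forall x, exists i, `|w x| <= `|f i x|) -> (@lebesgue_measure R).-integrable setT (EFin \o w).
  move=> mw hw; apply: (@le_integrable _ _ _ (@lebesgue_measure R) setT measurableT _ _ _ _ iS).
    exact/measurable_EFinP.
  move=> x _; rewrite /= sumEFin !abse_EFin lee_fin.
  have [i hi] := hw x; apply: (le_trans hi); rewrite (ger0_norm (sumr_ge0 _ _)) //.
  by rewrite (bigD1 i) //= lerDl sumr_ge0.
have ifp i : (@lebesgue_measure R).-integrable setT (EFin \o fp i).
  apply: bnd => // x; exists i; rewrite /fp; case: (leP 0 (f i x)) => h //.
  by rewrite normr0.
have iMp : (@lebesgue_measure R).-integrable setT (EFin \o Mp).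
  apply: bnd => // x; have [j hj] := max_fun_ex _ _ f i0 x.
  exists j; rewrite /Mp /mx hj; case: (leP 0 (f j x)) => h //.
  by rewrite normr0.
have imp : (@lebesgue_measure R).-integrable setT (EFin \o mp).
  apply: bnd => // x; have [j hj] := min_fun_ex _ _ f i0 x.
  exists j; rewrite /mp /mn hj; case: (leP 0 (f j x)) => h //.
  by rewrite normr0.
have posM (E : set (measurableTypeR R)) : (0 <= induced_charge iMp E)%E.
  by apply: integral_ge0 => x _; rewrite lee_fin.
have posL (E : set (measurableTypeR R)) : (0 <= induced_charge imp E)%E.
  by apply: integral_ge0 => x _; rewrite lee_fin.
pose muM := measure_of_charge (induced_charge iMp) posM.
pose muL := measure_of_charge (induced_charge imp) posL.
have finM A : measurable A -> muM A \is a fin_num.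
  by move=> mA; apply: integrable_fin_num => //; exact: (integrableS measurableT mA (subsetT _) iMp).
have finL A : measurable A -> muL A \is a fin_num.
  by move=> mA; apply: integrable_fin_num => //; exact: (integrableS measurableT mA (subsetT _) imp).
pose nt := toR R nutheta.
have finT A : measurable A -> nt A \is a fin_num by exact: toR_fin.
have finI i A : measurable A -> toR R (nu i) A \is a fin_num by exact: toR_fin.
have incr i a b : a <= b -> nu i (`]a, b]%classic : set R) =
    (mcdf (nu i) b - mcdf (nu i) a)%:E.
  by move=> ab; exact: (@mcdf_itv R (toR R (nu i)) (finI i) a b ab).
have le1 A : measurable A -> (nt A <= muM A)%E.
  apply: meas_le => // a b ab.
  suff : mcdf nt b <= mcdf nt a + (mcdf muM b - mcdf muM a) by lra.
  change (mcdf nutheta b <= mcdf nutheta a + (mcdf muM b - mcdf muM a)).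
  rewrite !hnutheta; apply: Ftheta_le => // i.
  rewrite -lerBlDl -lee_fin -incr // -(@mcdf_itv R muM finM a b ab) hdp //.
  change (\int[lebesgue_measure]_(x in (`]a, b]%classic : set R)) (fp i x)%:E <= \int[lebesgue_measure]_(x in (`]a, b]%classic : set R)) (Mp x)%:E)%E.
  apply: le_integral => //.
  - exact: (integrableS measurableT _ (subsetT _) (ifp i)).
  - exact: (integrableS measurableT _ (subsetT _) iMp).
  by move=> x _; rewrite lee_fin.
have le2 A : measurable A -> (muL A <= nt A)%E.
  apply: meas_le => // a b ab.
  suff : mcdf nt a <= mcdf nt b + - (mcdf muL b - mcdf muL a) by lra.
  change (mcdf nutheta a <= mcdf nutheta b + - (mcdf muL b - mcdf muL a)).
  rewrite !hnutheta; apply: Ftheta_le => // i.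
  suff : mcdf muL b - mcdf muL a <= mcdf (nu i) b - mcdf (nu i) a by lra.
  rewrite -lee_fin -incr // -(@mcdf_itv R muL finL a b ab) hdp //.
  change (\int[lebesgue_measure]_(x in (`]a, b]%classic : set R)) (mp x)%:E <= \int[lebesgue_measure]_(x in (`]a, b]%classic : set R)) (fp i x)%:E)%E.
  apply: le_integral => //.
  - exact: (integrableS measurableT _ (subsetT _) imp).
  - exact: (integrableS measurableT _ (subsetT _) (ifp i)).
  by move=> x _; rewrite lee_fin.
have dom : nt `<< (@lebesgue_measure R).
  apply/null_content_dominatesP => A mA A0.
  apply/eqP; rewrite eq_le measure_ge0 andbT (le_trans (le1 A mA))//.
  rewrite /muM /measure_of_charge /induced_charge null_set_integral//.
  by apply: measurable_funTS; apply/measurable_EFinP.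
have [h [h0 hfin ih hA]] := radon_nikodym_sigma_finite dom.
pose g x := fine (h x).
have hg : EFin \o g = h by apply/funext => x; rewrite /= /g fineK.
have intg A : measurable A -> (\int[lebesgue_measure]_(x in A) (g x)%:E)%E = nt A.
  move=> mA; apply: esym; apply: eq_trans (hA A mA) _.
  by apply: eq_integral => x _; rewrite /g fineK.
have mg : measurable_fun (setT : set (measurableTypeR R)) g.
  by apply/measurable_EFinP; rewrite hg; exact: measurable_int ih.
have ig : (@lebesgue_measure R).-integrable setT (EFin \o g) by rewrite hg.
have gM : {ae (@lebesgue_measure R), forall x, g x <= Mp x}.
  apply: (ae_le_int _ _ _ _ g Mp) => // E mE.
  by rewrite intg //; exact: le1.
have gm : {ae (@lebesgue_measure R), forall x, mp x <= g x}.
  apply: (ae_le_int _ _ _ (@lebesgue_measure R) mp g imp ig) => E mE.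
  by rewrite intg //; exact: le2.
have Mmx : {ae (@lebesgue_measure R), forall x, Mp x = mx x}.
  apply: aeS fall => x hx; rewrite /Mp max_l //.
  exact: le_trans (hx i0) (max_fun_ge _ _ f i0 x).
have emn : {ae (@lebesgue_measure R), forall x, mp x = mn x}.
  apply: aeS fall => x hx; rewrite /mp max_l //.
  by rewrite /mn; have [j ->] := min_fun_ex _ _ f i0 x; exact: hx.
have bounds : {ae (@lebesgue_measure R), forall x, [/\ 0 <= mn x, mn x <= g x,
    g x <= mx x & mx x <= \sum_(i < N) f i x]}.
  apply: (aeS2 _ (aeS2 (fun x a b => conj a b) gM gm) (aeS2 (fun x a b => (a, b)) Mmx (aeS2 (fun x a b => conj a b) emn fall))).
  move=> x [gMx gmx] [Mx [mnx fx]]; split.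
  - by rewrite -mnx.
  - by rewrite -mnx.
  - by rewrite -Mx.
  - rewrite /mx; have [j ->] := max_fun_ex _ _ f i0 x.
    by rewrite (bigD1 j) //= lerDl; apply: sumr_ge0 => k _; exact: fx.
exists g; split => //.
- by move=> A mA; rewrite intg.
- apply: aeS bounds => x [? ? ? ?]; apply/andP; split => //.
move=> p p1 hfp.
have mS : measurable_fun (setT : set (measurableTypeR R)) (fun x => \sum_(i < N) f i x).
  exact: measurable_sum.
have n1 : ('N[lebesgue_measure]_p[EFin \o min_fun f] <= 'N[lebesgue_measure]_p[EFin \o g])%E.
  apply: Lnorm_le_ae => //; apply: aeS bounds => x [a b c e].
  have g0 : 0 <= g x := le_trans a b.
  by rewrite (ger0_norm a) (ger0_norm g0).
have n2 : ('N[lebesgue_measure]_p[EFin \o g] <= 'N[lebesgue_measure]_p[EFin \o max_fun f])%E.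
  apply: Lnorm_le_ae => //; apply: aeS bounds => x [a b c e].
  have g0 : 0 <= g x := le_trans a b.
  have m0 : 0 <= mx x := le_trans g0 c.
  by rewrite (ger0_norm g0) (ger0_norm m0).
have n3 : ('N[lebesgue_measure]_p[EFin \o max_fun f] <=
    'N[lebesgue_measure]_p[EFin \o (fun x => (\sum_(i < N) f i x)%R)])%E.
  apply: Lnorm_le_ae => //; apply: aeS bounds => x [a b c e].
  have g0 : 0 <= g x := le_trans a b.
  have m0 : 0 <= mx x := le_trans g0 c.
  by rewrite (ger0_norm m0) (ger0_norm (le_trans m0 e)).
have n4 := Lnorm_sum _ _ _ (@lebesgue_measure R) _ f p p1 mf (index_enum 'I_N).
have n5 : ('N[lebesgue_measure]_p[EFin \o max_fun f]
            <= \sum_(i < N) 'N[lebesgue_measure]_p[EFin \o f i])%E.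
  exact: le_trans n3 n4.
split => //.
apply: le_lt_trans n2 _; apply: le_lt_trans n5 _.
exact: lte_sum_pinfty.
Qed.
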